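(* Let $L$ be an oriented, ordered virtual link diagram with affine bilabeling $C$. Let $L_i$ be a component with starting bilabel $(a_1,a_2)$ and weight $n$; put $A=a_1+a_2$. Let $c$ be the first classical crossing met by $L_i$ after its starting point. The crossing $c$ involves components $i$ and $j$, where possibly $j=i$. Let $\iota$ be the index change of $L_i$'s passage through $c$. Let $C'$ be the coloring obtained by moving the starting point of $L_i$ forward just past this passage through $c$, keeping the same starting bilabel. Write $p_{(L,C)}=\sum_{d}\operatorname{sgn}(d)\,t_{o(d)}^{W_C(d)}-\mathrm{writhe}(L)$. Then $p_{(L,C')}$ is obtained from $p_{(L,C)}$ by: - replacing $A$ with $A-\iota$ in every exponent; and - multiplying the monomial corresponding to the crossing $c$ by $t_i^{\,n}$ if $L_i$ passed through the overstrand of $c$, or by $t_j^{-n}$ if $L_i$ passed through the understrand of $c$ (here $j=o(c)$ is the component of the overstrand).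
   Context: **Diagrams.** A virtual link diagram is an oriented planar diagram of ordered closed curves $L_1,\dots,L_n$ (components) with classical and virtual crossings. **Crossing conventions.** Draw a classical crossing with both strands oriented upward. - The bottom-left-to-top-right strand has index change $-1$; the bottom-right-to-top-left strand has index change $+1$. - The crossing is positive ($\operatorname{sgn}=+1$) if the overstrand is the bottom-left-to-top-right strand, and negative otherwise. - Self-crossings have both strands on one component; external crossings have strands on different components. - The weight of $L_i$ is the sum of the index changes of $L_i$ over its passages through external classical crossings. **Affine bilabeling.** - Each component $L_k$ gets a starting point with bilabel $(a^{(k)}_1,a^{(k)}_2)$ of formal integer variables, distinct for different components. - The bilabel is carried along the component in its orientation and is unchanged at virtual crossings. - At a classical crossing with index change $\varepsilon$, the first entry changes by $\varepsilon$ at a self-crossing, and the second entry changes by $\varepsilon$ at an external crossing. - The discrepancy (the component weight, in the second entry) on returning is placed at the starting point. **Weights and polynomial.** Let $|(x,y)|=x+y$. With both strands drawn upward: - if $c$ is positive, $W(c)=|\text{bottom-left}|-|\text{top-left}|$; - if $c$ is negative, $W(c)=|\text{bottom-right}|-|\text{top-right}|$. These are integer linear expressions in the sums $a^{(k)}_1+a^{(k)}_2$. The multi-variable affine index polynomial is $p_{(L,C)}=\sum_c\operatorname{sgn}(c)(t_{o(c)}^{W(c)}-1)$ over classical crossings, where $o(c)$ is the component of the overstrand. *)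

(* Defs.v *)
(* Combinatorial (Gauss-diagram) model of an oriented,
   ordered virtual link diagram with an affine bilabeling. *)
From HB Require Import structures.
From mathcomp Require Import all_boot all_order all_algebra.
Set Implicit Arguments. Unset Strict Implicit. Unset Printing Implicit Defensive.
Import Order.TTheory GRing.Theory Num.Theory.
Local Open Scope ring_scope.

Section VirtualLinks.
Variables (m N : nat).
(* m = number of (ordered) components L_0..L_{m-1};
   N = number of classical crossings (virtual crossings carry no data).   *)

(* A passage of a component through a classical crossing, drawn with both
   strands oriented upward: (d, true) is the passage along the
   bottom-left-to-top-right strand of crossing d, (d, false) the passage
   along the bottom-right-to-top-left strand. *)
Definition passage := ('I_N * bool)%type.

(* comps k = the passages of component k through classical crossings, in
   the order met when travelling along L_k from its starting point.
   overBL d = the overstrand of d is the bottom-left-to-top-right strand. *)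
Record vdiagram := VDiagram {
  comps : {ffun 'I_m -> seq passage};
  overBL : {ffun 'I_N -> bool} }.

Implicit Types (D : vdiagram) (d : 'I_N) (p : passage) (k : 'I_m).

Definition wf D : bool :=
  uniq (flatten [seq comps D k | k <- enum 'I_m]) &&
  [forall p : passage, [exists k, p \in comps D k]].

Definition sgn D d : int := if overBL D d then 1 else -1.
Definition writhe D : int := \sum_(d : 'I_N) sgn D d.

Definition ichange p : int := if p.2 then -1 else 1.

Definition self_cr D d : bool :=
  [exists k, ((d, true) \in comps D k) && ((d, false) \in comps D k)].

Definition comp_of D p : option 'I_m := [pick k | p \in comps D k].
Definition over_comp D d : option 'I_m := comp_of D (d, overBL D d).

Definition weight D k : int :=
  \sum_(p <- comps D k | ~~ self_cr D p.1) ichange p.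

(* A bilabel on component k has the form (a^(k)_1 + off1, a^(k)_2 + off2);
   it is represented by the triple (k, off1, off2). *)
Definition bilabel := ('I_m * int * int)%type.

(* bilabel of the arc of L_k after its first j passages (starting bilabel
   (a_1,a_2) at j = 0; for j = size, the arc ending at the starting point,
   carrying the discrepancy). *)
Definition label_after D k (j : nat) : bilabel :=
  (k, \sum_(p <- take j (comps D k) | self_cr D p.1) ichange p,
      \sum_(p <- take j (comps D k) | ~~ self_cr D p.1) ichange p).

Definition in_label D k p : bilabel := label_after D k (index p (comps D k)).
Definition out_label D k p : bilabel := label_after D k (index p (comps D k)).+1.

(* Exponents: integer affine expressions e.1 + sum_k e.2 k * A_k in the
   formal sums A_k = a^(k)_1 + a^(k)_2. *)
Definition expo := (int * {ffun 'I_m -> int})%type.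
Definition Avar k : expo := (0, [ffun k' => ((k' == k) : nat)%:Z]).
Definition cexp (z : int) : expo := (z, 0).

Definition labsum (b : bilabel) : expo :=
  Avar b.1.1 + cexp (b.1.2 + b.2).

Definition W D d : expo :=
  match comp_of D (d, true), comp_of D (d, false) with
  | Some kBL, Some kBR =>
      if overBL D d then
        (* positive: |bottom-left| - |top-left| *)
        labsum (in_label D kBL (d, true)) - labsum (out_label D kBR (d, false))
      else
        (* negative: |bottom-right| - |top-right| *)
        labsum (in_label D kBR (d, false)) - labsum (out_label D kBL (d, true))
  | _, _ => 0
  end.

(* Polynomials are formal Z-linear combinations of monomials t_k^e; a
   polynomial is represented by its coefficient function on monomial keys:
   Some (k, e) stands for t_k^e with e <> 0, and None for t_k^0 = 1. *)
Definition monokey := option ('I_m * expo).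
Definition mkey (o : option 'I_m) (e : expo) : monokey :=
  if e == 0 then None else omap (fun k => (k, e)) o.
Definition mono (o : option 'I_m) (e : expo) : monokey -> int :=
  fun x => ((x == mkey o e) : nat)%:Z.
Definition one_poly : monokey -> int := mono None 0.

Definition aip D : monokey -> int :=
  fun x => \sum_(d : 'I_N) sgn D d * (mono (over_comp D d) (W D d) x - one_poly x).

Definition subst_A (i : 'I_m) (iota : int) (e : expo) : expo :=
  (e.1 - iota * e.2 i, e.2).

Definition move_start D (i : 'I_m) : vdiagram :=
  VDiagram [ffun k => if k == i then rot 1 (comps D k) else comps D k]
           (overBL D).

End VirtualLinks.

(* Main.v *)
Require Import Defs.
From HB Require Import structures.
From mathcomp Require Import all_boot all_order all_algebra zify ring.
From Stdlib Require Import FunctionalExtensionality.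
Import Order.TTheory GRing.Theory Num.Theory.
Set Implicit Arguments. Unset Strict Implicit.
Local Open Scope ring_scope.

Lemma sum_count m N (D : vdiagram m N) p : wf D ->
  (\sum_(k < m) count_mem p (comps D k) <= 1)%N.
Proof.
move=> /andP[U _]; have := count_uniq_mem p U.
rewrite count_flatten -map_comp sumnE big_map big_enum /= => ->.
by case: (_ \in _).
Qed.

Lemma comp_uniq m N (D : vdiagram m N) p k1 k2 : wf D ->
  p \in comps D k1 -> p \in comps D k2 -> k1 = k2.
Proof.
move=> wfD h1 h2; apply/eqP; apply/negPn/negP => ne.
have := sum_count p wfD; rewrite (bigD1 k1) // (bigD1 k2) /=; last by rewrite eq_sym.
have h1' : (0 < count_mem p (comps D k1))%N by rewrite -has_count has_pred1.
have h2' : (0 < count_mem p (comps D k2))%N by rewrite -has_count has_pred1.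
rewrite addnA; move/(leq_trans (leq_addr _ _)).
by move: (leq_add h1' h2'); rewrite addn1 => /leq_trans H /H.
Qed.

Lemma uniq_comp m N (D : vdiagram m N) k : wf D -> uniq (comps D k).
Proof.
move=> wfD; apply: count_mem_uniq => p.
have := sum_count p wfD; rewrite (bigD1 k) //=.
have : (0 < count_mem p (comps D k))%N = (p \in comps D k) by rewrite -has_count has_pred1.
case: (p \in _) => /=; lia.
Qed.

Lemma mem_move m N (D : vdiagram m N) i p k :
  p \in comps (move_start D i) k = (p \in comps D k).
Proof. by rewrite /move_start /= ffunE; case: eqP => // ->; rewrite mem_rot. Qed.

Lemma self_move m N (D : vdiagram m N) i d :
  self_cr (move_start D i) d = self_cr D d.
Proof. by apply: eq_existsb => k; rewrite !mem_move. Qed.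

Lemma comp_of_move m N (D : vdiagram m N) i p :
  comp_of (move_start D i) p = comp_of D p.
Proof. by apply: eq_pick => k; rewrite /= mem_move. Qed.

Lemma over_comp_move m N (D : vdiagram m N) i d :
  over_comp (move_start D i) d = over_comp D d.
Proof. by rewrite /over_comp comp_of_move. Qed.

Definition flipp N (p : passage N) : passage N := (p.1, ~~ p.2).

Lemma selfsum0 m N (D : vdiagram m N) i : wf D ->
  \sum_(p <- comps D i | self_cr D p.1) ichange p = 0.
Proof.
move=> wfD; have U := uniq_comp i wfD.
set T := fun p : passage N => if (p \in comps D i) && self_cr D p.1 then ichange p else 0.
have -> : \sum_(p <- comps D i | self_cr D p.1) ichange p = \sum_p T p.
  rewrite big_mkcond big_uniq //= big_mkcond /=; apply: eq_bigr => p _.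
  by rewrite /T; case: (p \in _).
have fl : forall p, T (flipp p) = - T p.
  move=> [d b]; rewrite /T /flipp /=.
  have E : ((d, ~~ b) \in comps D i) && self_cr D d = ((d, b) \in comps D i) && self_cr D d.
    have part : forall b1 b2, (d, b1) \in comps D i -> self_cr D d -> (d, b2) \in comps D i.
      move=> b1 b2 h /existsP[k /andP[ht hf]].
      have hk : k = i by apply: (comp_uniq wfD _ h); case: b1 {h}.
      by rewrite -hk; case: b2.
    by apply/andP/andP => -[h1 h2]; split => //; apply: part h1 h2.
  by rewrite E; case: ifP => // _; clear E; case: b; rewrite /ichange /= ?opprK.
have finj : injective (@flipp N).
  by move=> [? ?] [? ?] [-> /negbLR]; rewrite negbK => ->.
have : \sum_p T p = - \sum_p T p.
  rewrite [LHS](reindex_inj finj) /=.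
  by rewrite -sumrN; apply: eq_bigr => p _; rewrite fl.
move=> /eqP; rewrite -addr_eq0 -mulr2n mulrn_eq0 /= => /eqP //.
Qed.

Definition tot N (s : seq (passage N)) (j : nat) : int := \sum_(p <- take j s) ichange p.

Lemma lab_tot m N (D : vdiagram m N) k j :
  labsum (label_after D k j) = Avar k + cexp m (tot (comps D k) j).
Proof.
rewrite /labsum /label_after /tot /=; congr (_ + cexp _ _).
by rewrite [RHS](bigID (fun p => self_cr D p.1)) /=.
Qed.

Lemma tot_all m N (D : vdiagram m N) i : wf D ->
  \sum_(p <- comps D i) ichange p = weight D i.
Proof. by move=> wfD; rewrite (bigID (fun p => self_cr D p.1)) /= selfsum0 // add0r. Qed.

Lemma tot_shift m N (D : vdiagram m N) i q rest k p e : wf D ->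
  comps D i = q :: rest -> p \in comps D k -> (e <= 1)%N ->
  tot (comps (move_start D i) k) (index p (comps (move_start D i) k) + e) =
  tot (comps D k) (index p (comps D k) + e) - (if k == i then ichange q else 0)
  + (if (k == i) && (p == q) then weight D i else 0).
Proof.
move=> wfD hi hp he.
rewrite /move_start /= ffunE.
case: (eqVneq k i) => [ek|nk]; last by rewrite /= subr0 addr0.
subst k; rewrite hi rot1_cons -cats1 /=.
have U := uniq_comp i wfD; rewrite hi /= in U; case/andP: U => qn U.
move: hp; rewrite hi inE => /orP[/eqP ->|pr].
  rewrite eqxx /= index_cat (negbTE qn) /= eqxx addn0 /tot take_cat ltnNge leq_addr /= addKn.
  have := tot_all i wfD; rewrite hi big_cons /= => A.
  rewrite big_cat /=.
  case: e he => [|[|//]] _ /=; rewrite ?take0 ?big_cons ?big_nil /=; rewrite -A; ring.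
have pq : p != q by apply: contraNneq qn => <-.
have qp : q != p by rewrite eq_sym.
rewrite (negbTE pq) (negbTE qp) /= index_cat pr /= addr0 /tot takel_cat; last first.
  have hj : (index p rest < size rest)%N by rewrite index_mem.
  by case: e he => [|[|]] // _; rewrite ?addn0 ?addn1 ?(ltnW hj).
have -> : ((index p rest).+1 + e = (index p rest + e).+1)%N by [].
rewrite /= big_cons; ring.
Qed.

Lemma expo_ext m (e1 e2 : expo m) : e1.1 = e2.1 -> e1.2 = e2.2 -> e1 = e2.
Proof. by case: e1 e2 => ? ? [? ?] /= -> ->. Qed.

Lemma key m (k1 k2 i : 'I_m) (x y a b iota : int) :
  (Avar k1 + cexp m x + cexp m a) - (Avar k2 + cexp m y + cexp m b) =
  subst_A i iota (Avar k1 + cexp m x - (Avar k2 + cexp m y)) +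
  cexp m (a - b + iota * (((k1 == i) : nat)%:Z - ((k2 == i) : nat)%:Z)).
Proof.
apply: expo_ext => /=.
  by rewrite !ffunE /= (eq_sym i k1) (eq_sym i k2); ring.
by rewrite !addr0.
Qed.

Lemma labsum_move m N (D : vdiagram m N) i q rest k p e : wf D ->
  comps D i = q :: rest -> p \in comps D k -> (e <= 1)%N ->
  labsum (label_after (move_start D i) k (index p (comps (move_start D i) k) + e)) =
  Avar k + cexp m (tot (comps D k) (index p (comps D k) + e)) +
  cexp m (- (if k == i then ichange q else 0)
          + (if (k == i) && (p == q) then weight D i else 0)).
Proof.
move=> wfD hi hp he; rewrite lab_tot (tot_shift wfD hi hp he).
apply: expo_ext => /=; [ring | by rewrite !addr0].
Qed.

Lemma in_move m N (D : vdiagram m N) i q rest k p : wf D ->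
  comps D i = q :: rest -> p \in comps D k ->
  labsum (in_label (move_start D i) k p) =
  Avar k + cexp m (tot (comps D k) (index p (comps D k))) +
  cexp m (- (if k == i then ichange q else 0)
          + (if (k == i) && (p == q) then weight D i else 0)).
Proof.
move=> wfD hi hp; have := labsum_move wfD hi hp (leq0n 1).
by rewrite !addn0.
Qed.

Lemma out_move m N (D : vdiagram m N) i q rest k p : wf D ->
  comps D i = q :: rest -> p \in comps D k ->
  labsum (out_label (move_start D i) k p) =
  Avar k + cexp m (tot (comps D k) (index p (comps D k)).+1) +
  cexp m (- (if k == i then ichange q else 0)
          + (if (k == i) && (p == q) then weight D i else 0)).
Proof.
move=> wfD hi hp; have := labsum_move wfD hi hp (leqnn 1).
by rewrite !addn1.
Qed.

Lemma in_D m N (D : vdiagram m N) k p :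
  labsum (in_label D k p) = Avar k + cexp m (tot (comps D k) (index p (comps D k))).
Proof. exact: lab_tot. Qed.
Lemma out_D m N (D : vdiagram m N) k p :
  labsum (out_label D k p) = Avar k + cexp m (tot (comps D k) (index p (comps D k)).+1).
Proof. exact: lab_tot. Qed.

Lemma comp_of_some m N (D : vdiagram m N) p : wf D ->
  exists k, comp_of D p = Some k /\ p \in comps D k.
Proof.
move=> wfD; rewrite /comp_of; case: pickP => [k hk|none]; first by exists k.
case/andP: wfD => _ /forallP /(_ p) /existsP [k hk]; by rewrite none in hk.
Qed.

Lemma W_move m N (D : vdiagram m N) i c s0 rest d : wf D ->
  comps D i = (c, s0) :: rest ->
  W (move_start D i) d = subst_A i (ichange (c, s0)) (W D d) +
    (if d == c then (if s0 == overBL D c then cexp m (weight D i) else cexp m (- weight D i))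
     else 0).
Proof.
move=> wfD hi.
have [kT [eT hT]] := comp_of_some (d, true) wfD.
have [kF [eF hF]] := comp_of_some (d, false) wfD.
rewrite /W !comp_of_move eT eF /=.
have eqT : (kT == i) && ((d, true) == (c, s0)) = ((d, true) == (c, s0)).
  case E: ((d, true) == (c, s0)); rewrite ?andbF ?andbT //; apply/eqP.
  by apply: (comp_uniq wfD hT); rewrite hi (eqP E) mem_head.
have eqF : (kF == i) && ((d, false) == (c, s0)) = ((d, false) == (c, s0)).
  case E: ((d, false) == (c, s0)); rewrite ?andbF ?andbT //; apply/eqP.
  by apply: (comp_uniq wfD hF); rewrite hi (eqP E) mem_head.
case hO: (overBL D d) => /=.
  rewrite (in_move wfD hi hT) (out_move wfD hi hF) in_D out_D (key _ _ i _ _ _ _ (ichange (c, s0))).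
  congr (_ + _); rewrite eqT eqF !xpair_eqE.
  case: (eqVneq d c) => [ed|ne] /=.
    subst d; rewrite hO; case: s0 {hi eqT eqF} => /=;
    (apply: expo_ext => //=; case: (kT == i); case: (kF == i) => /=; ring).
  apply: expo_ext => //=; case: (kT == i); case: (kF == i) => /=; ring.
rewrite (in_move wfD hi hF) (out_move wfD hi hT) in_D out_D (key _ _ i _ _ _ _ (ichange (c, s0))).
congr (_ + _); rewrite eqT eqF !xpair_eqE.
case: (eqVneq d c) => [ed|ne] /=.
  subst d; rewrite hO; case: s0 {hi eqT eqF} => /=;
  (apply: expo_ext => //=; case: (kT == i); case: (kF == i) => /=; ring).
apply: expo_ext => //=; case: (kT == i); case: (kF == i) => /=; ring.
Qed.


Theorem proposition7 (m N : nat) (D : vdiagram m N) (i : 'I_m)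
    (c : 'I_N) (s0 : bool) (rest : seq (passage N)) :
  wf D ->
  comps D i = (c, s0) :: rest ->
  let n := weight D i in
  let iota := ichange (c, s0) in
  aip (move_start D i) =
  (fun x => \sum_(d : 'I_N) sgn D d *
              mono (over_comp D d)
                (subst_A i iota (W D d) +
                 (if d == c then
                    (if s0 == overBL D c then cexp m n else cexp m (- n))
                  else 0)) x
            - writhe D * one_poly x).
Proof.
move=> wfD hi n iota; apply: functional_extensionality => x.
rewrite /aip /writhe mulr_suml -sumrB; apply: eq_bigr => d _.
rewrite mulrBr over_comp_move (W_move d wfD hi).
by [].
Qed.
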